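(* Let $f:\mathbb{R}^n\to\mathbb{R}$ be strongly convex with constant $\mu\ge0$, and let $\gamma_k>0$, $\delta_k>0$, $s_k>0$ for all $k$. Then the iterates of the random incremental penalty method surely satisfy, for all $y\in X$ and $k\ge1$, $$\|x_{k+1}-y\|^2\le(1-\mu s_k)\|x_k-y\|^2+2s_k\big(f(y)-f(x_k)\big)+\frac{s_k\gamma_k\delta_k}{2\alpha_{\min}}-2s_k\gamma_k\,\mathrm{dist}(x_k,X_{i_k})+s_k^2\big(\|\tilde\nabla f(x_k)\|+\gamma_k\big)^2.$$
   Context: Let $a_1,\dots,a_m\in\mathbb{R}^n$ be nonzero vectors and $b_1,\dots,b_m\in\mathbb{R}$; $X_i=\{x:\langle a_i,x\rangle-b_i\le0\}$, $X=\bigcap_{i=1}^mX_i$ (assumed nonempty), $\alpha_{\min}=\min_i\|a_i\|$. Strong convexity with constant $\mu\ge0$ means $f(u)\ge f(v)+\langle g,u-v\rangle+\frac{\mu}{2}\|u-v\|^2$ for all $u,v$ and all $g\in\partial f(v)$ ($\mu=0$: convex). For $\delta>0$, nonzero $a$ and scalar $b$: $h_\delta(x;a,b)=\frac{\langle a,x\rangle-b}{\|a\|}$ if $\langle a,x\rangle-b>\delta$, $\frac{(\langle a,x\rangle-b+\delta)^2}{4\delta\|a\|}$ if $-\delta\le\langle a,x\rangle-b\le\delta$, $0$ if $\langle a,x\rangle-b<-\delta$; its gradient is $\nabla h_\delta(x;a,b)=\frac{1}{\|a\|}p'_\delta(\langle a,x\rangle-b)\,a$ with $p'_\delta(s)=1$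 for $s>\delta$, $\frac{s+\delta}{2\delta}$ for $|s|\le\delta$, $0$ for $s<-\delta$. Random incremental penalty method: from an initial point $x_1$, for $k\ge1$, $x_{k+1}=x_k-s_k\big[\tilde\nabla f(x_k)+\gamma_k\nabla h_{\delta_k}(x_k;a_{i_k},b_{i_k})\big]$, where $\tilde\nabla f(x_k)\in\partial f(x_k)$ and $i_k\in\{1,\dots,m\}$ is chosen uniformly at random. *)

(* Defs.v *)
From HB Require Import structures.
From mathcomp Require Import all_boot all_order all_algebra.
From mathcomp Require Import classical_sets reals.
Set Implicit Arguments. Unset Strict Implicit. Unset Printing Implicit Defensive.
Import Order.TTheory GRing.Theory Num.Theory.
Local Open Scope ring_scope.
Local Open Scope classical_set_scope.

Section Defs.
Variables (R : realType) (n : nat).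

Definition dotv (u v : 'rV[R]_n) : R := \sum_(j < n) u 0 j * v 0 j.
Definition normv (u : 'rV[R]_n) : R := Num.sqrt (dotv u u).

Definition halfspace (a : 'rV[R]_n) (b : R) : set 'rV[R]_n :=
  [set x | dotv a x - b <= 0].

Definition feasible m (a : 'I_m -> 'rV[R]_n) (b : 'I_m -> R) : set 'rV[R]_n :=
  [set x | forall j, halfspace (a j) (b j) x].

Definition distS (x : 'rV[R]_n) (S : set 'rV[R]_n) : R :=
  inf [set normv (x - z) | z in S].

(* alpha_min = min_i ||a_i|| (inf of a finite nonempty set = its minimum) *)
Definition alpha_min m (a : 'I_m -> 'rV[R]_n) : R :=
  inf [set normv (a j) | j in [set: 'I_m]].

Definition subdiff (f : 'rV[R]_n -> R) (v : 'rV[R]_n) : set 'rV[R]_n :=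
  [set g | forall u, f v + dotv g (u - v) <= f u].

Definition strongly_convex (mu : R) (f : 'rV[R]_n -> R) : Prop :=
  forall u v g, subdiff f v g ->
    f v + dotv g (u - v) + mu / 2 * normv (u - v) ^+ 2 <= f u.

Definition dpen (delta s : R) : R :=
  if delta < s then 1 else if s < - delta then 0 else (s + delta) / (2 * delta).

Definition hpen (delta : R) (a : 'rV[R]_n) (b : R) (x : 'rV[R]_n) : R :=
  let t := dotv a x - b in
  if delta < t then t / normv a
  else if t < - delta then 0 else (t + delta) ^+ 2 / (4 * delta * normv a).

Definition grad_hpen (delta : R) (a : 'rV[R]_n) (b : R) (x : 'rV[R]_n) : 'rV[R]_n :=
  (dpen delta (dotv a x - b) / normv a) *: a.

End Defs.

(* Main.v *)
Require Import Defs.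
From HB Require Import structures.
From mathcomp Require Import all_boot all_order all_algebra.
From mathcomp Require Import classical_sets reals.
From mathcomp Require Import ring lra.
Import Order.TTheory GRing.Theory Num.Theory.
Local Open Scope ring_scope.
Local Open Scope classical_set_scope.

Set Implicit Arguments. Unset Strict Implicit.
Section H.
Variables (R : realType) (n : nat).
Implicit Types (u v w : 'rV[R]_n) (c : R).

Lemma dotvC u v : dotv u v = dotv v u.
Proof. by apply: eq_bigr => j _; rewrite mulrC. Qed.
Lemma dotvDl u v w : dotv (u + v) w = dotv u w + dotv v w.
Proof. by rewrite /dotv -big_split; apply: eq_bigr => j _; rewrite mxE mulrDl. Qed.
Lemma dotvZl c u v : dotv (c *: u) v = c * dotv u v.
Proof. by rewrite /dotv mulr_sumr; apply: eq_bigr => j _; rewrite mxE mulrA. Qed.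
Lemma dotvNl u v : dotv (- u) v = - dotv u v.
Proof. by rewrite -scaleN1r dotvZl mulN1r. Qed.
Lemma dotvBl u v w : dotv (u - v) w = dotv u w - dotv v w.
Proof. by rewrite dotvDl dotvNl. Qed.
Lemma dotvDr u v w : dotv w (u + v) = dotv w u + dotv w v.
Proof. by rewrite dotvC dotvDl !(dotvC w). Qed.
Lemma dotvZr c u v : dotv v (c *: u) = c * dotv v u.
Proof. by rewrite dotvC dotvZl dotvC. Qed.
Lemma dotvBr u v w : dotv w (u - v) = dotv w u - dotv w v.
Proof. by rewrite dotvC dotvBl !(dotvC w). Qed.
Lemma dotv_ge0 u : 0 <= dotv u u.
Proof. by apply: sumr_ge0 => j _; rewrite -expr2 sqr_ge0. Qed.
Lemma normv_ge0 u : 0 <= normv u.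
Proof. exact: sqrtr_ge0. Qed.
Lemma normv_sq u : normv u ^+ 2 = dotv u u.
Proof. by rewrite sqr_sqrtr // dotv_ge0. Qed.
Lemma dotv_eq0 u : dotv u u = 0 -> u = 0.
Proof.
move=> h; apply/rowP => j; rewrite mxE.
have h0 : forall i : 'I_n, true -> 0 <= u 0 i * u 0 i.
  by move=> i _; rewrite -expr2 sqr_ge0.
have := psumr_eq0P h0 h (i := j) isT.
by rewrite -expr2 => /eqP; rewrite sqrf_eq0 => /eqP.
Qed.
Lemma normv_gt0 u : u != 0 -> 0 < normv u.
Proof.
move=> h; rewrite sqrtr_gt0 lt_def dotv_ge0 andbT.
by apply/eqP => /dotv_eq0 /eqP; rewrite (negbTE h).
Qed.
Lemma normvZ c u : normv (c *: u) = `|c| * normv u.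
Proof. by rewrite /normv dotvZl dotvZr mulrA -expr2 sqrtrM ?sqr_ge0 // sqrtr_sqr. Qed.
Lemma normvN u : normv (- u) = normv u.
Proof. by rewrite -scaleN1r normvZ normrN1 mul1r. Qed.

Lemma cauchy_schwarz u v : dotv u v <= normv u * normv v.
Proof.
have [->|nz] := eqVneq v 0.
  by rewrite /dotv big1 ?mulr_ge0 ?normv_ge0 // => j _; rewrite mxE mulr0.
have Cp : 0 < dotv v v by rewrite -normv_sq exprn_gt0 // normv_gt0.
set A := dotv u u; set B := dotv u v; set C := dotv v v.
have h := dotv_ge0 (u - (B / C) *: v).
rewrite dotvBl !dotvBr !dotvZl !dotvZr -/A -/B -/C (dotvC v u) -/B in h.
have h2 : B ^+ 2 <= A * C.
  have : 0 <= C * (A - B / C * B - (B / C * B - B / C * (B / C * C))).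
    by rewrite mulr_ge0 // ltW.
  have -> : C * (A - B / C * B - (B / C * B - B / C * (B / C * C))) = A * C - B ^+ 2.
    by field; rewrite gt_eqF.
  by rewrite subr_ge0.
rewrite /normv -sqrtrM ?dotv_ge0 // -/A -/C.
apply: le_trans (ler_norm B) _; rewrite -sqrtr_sqr.
by rewrite ler_sqrt // mulr_ge0 // dotv_ge0.
Qed.
End H.

Section H2.
Variables (R : realType) (n : nat).

Lemma distS_le (x z : 'rV[R]_n) (S : set 'rV[R]_n) : S z -> distS x S <= normv (x - z).
Proof.
move=> Sz; apply: (ge_inf (E := [set normv (x - z) | z in S])).
  by exists 0 => _ [w _ <-]; exact: normv_ge0.
by exists z.
Qed.

Lemma dist_half (a x : 'rV[R]_n) (b : R) : a != 0 ->
  normv a * distS x (halfspace a b) <= Num.max (dotv a x - b) 0.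
Proof.
move=> anz; have Np := normv_gt0 anz; set t := dotv a x - b.
have [tle|tgt] := leP t 0.
  have : distS x (halfspace a b) <= normv (x - x) by apply: distS_le; rewrite /halfspace /=.
  rewrite subrr /normv /dotv big1 ?sqrtr0 => [h|j _]; last by rewrite mxE mulr0.
  by rewrite mulr_ge0_le0 // sqrtr_ge0.

set z := x - (t / normv a ^+ 2) *: a.
have hz : halfspace a b z.
  rewrite /halfspace /= /z dotvBr dotvZr -normv_sq.
  have -> : dotv a x - t / normv a ^+ 2 * normv a ^+ 2 - b = t - t / normv a ^+ 2 * normv a ^+ 2 by rewrite /t; ring.
  by rewrite divfK ?subrr // expf_neq0 // gt_eqF.
have := distS_le x hz; rewrite /z opprB addrC subrK normvZ.
rewrite ger0_norm; last by apply: divr_ge0; [exact: ltW | exact: sqr_ge0].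
move=> h.
rewrite -(ler_pM2l Np) in h; apply: le_trans h _.
have -> : normv a * (t / normv a ^+ 2 * normv a) = t by field; rewrite gt_eqF.
by [].
Qed.

Lemma alpha_le m (a : 'I_m -> 'rV[R]_n) j : alpha_min a <= normv (a j).
Proof.
apply: (ge_inf (E := [set normv (a j) | j in [set: 'I_m]])).
  by exists 0 => _ [w _ <-]; exact: normv_ge0.
by exists j.
Qed.

Lemma alpha_gt0 m (a : 'I_m -> 'rV[R]_n) : (0 < m)%N -> (forall j, a j != 0) -> 0 < alpha_min a.
Proof.
move=> m0 anz; pose j0 : 'I_m := Ordinal m0.
have [j _ hj] := @arg_minP _ R _ j0 predT (fun j => normv (a j)) isT.
apply: (lt_le_trans (normv_gt0 (anz j))).
apply: lb_le_inf; first by exists (normv (a j0)), j0.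
by move=> _ [w _ <-]; apply: hj.
Qed.

Lemma dpen_bounds (d s : R) : 0 < d -> 0 <= dpen d s <= 1.
Proof.
move=> dp; rewrite /dpen; case: ifP => h1; first by rewrite ler01 lexx.
case: ifP => h2; first by rewrite lexx ler01.
move/negbT: h1; move/negbT: h2; rewrite -!leNgt => h2 h1.
rewrite divr_ge0 ?ler_pdivrMr; try lra.
Qed.

Lemma dpen_key (d t : R) : 0 < d -> d / 8 + dpen d t * t >= Num.max t 0.
Proof.
move=> dp; rewrite /dpen; case: ifP => h1.
  rewrite max_l; lra.
case: ifP => h2.
  rewrite max_r; lra.
move/negbT: h1; move/negbT: h2; rewrite -!leNgt => h2 h1.
have e : (t + d) / (2 * d) * t = (t * t + d * t) / (2 * d) by field; rewrite gt_eqF; lra.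
rewrite e.
have [t0|t0] := leP t 0.

  have : 0 <= (t + d/2) ^+ 2 by apply: sqr_ge0.
  move=> h.  rewrite -subr_ge0.
  have -> : d / 8 + (t * t + d * t) / (2 * d) - 0 = (t + d/2) ^+ 2 / (2 * d) by field; rewrite gt_eqF; lra.
  by rewrite divr_ge0 //; lra.

rewrite -subr_ge0.
have -> : d / 8 + (t * t + d * t) / (2 * d) - t = (t - d/2) ^+ 2 / (2 * d) by field; rewrite gt_eqF; lra.
by rewrite divr_ge0 ?sqr_ge0 //; lra.
Qed.
End H2.

Unset Implicit Arguments.

Lemma expand (R : realType) (n : nat) (V g a : 'rV[R]_n) sk e :
  dotv (V - sk *: (g + e *: a)) (V - sk *: (g + e *: a)) =
  dotv V V - 2 * sk * dotv g V - 2 * sk * e * dotv a V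
  + sk ^+ 2 * (dotv g g + 2 * e * dotv g a + e ^+ 2 * dotv a a).
Proof.
rewrite !dotvBl !dotvBr !dotvZl !dotvZr !dotvDl !dotvDr !dotvZl !dotvZr.
rewrite (dotvC V g) (dotvC V a) (dotvC a g); ring.
Qed.

Theorem lemma8 (R : realType) (n m : nat)
  (a : 'I_m -> 'rV[R]_n) (b : 'I_m -> R)
  (f : 'rV[R]_n -> R) (mu : R)
  (gamma delta s : nat -> R)
  (x gf : nat -> 'rV[R]_n) (idx : nat -> 'I_m) :
  (0 < m)%N ->
  (forall j, a j != 0) ->
  (exists z, feasible a b z) ->
  0 <= mu -> strongly_convex mu f ->
  (forall k, 0 < gamma k) -> (forall k, 0 < delta k) -> (forall k, 0 < s k) ->
  (forall k, (1 <= k)%N -> subdiff f (x k) (gf k)) ->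
  (forall k, (1 <= k)%N ->
     x k.+1 = x k - s k *: (gf k + gamma k *: grad_hpen (delta k) (a (idx k)) (b (idx k)) (x k))) ->
  forall (y : 'rV[R]_n) (k : nat), feasible a b y -> (1 <= k)%N ->
    normv (x k.+1 - y) ^+ 2 <=
      (1 - mu * s k) * normv (x k - y) ^+ 2
      + 2 * s k * (f y - f (x k))
      + s k * gamma k * delta k / (2 * alpha_min a)
      - 2 * s k * gamma k * distS (x k) (halfspace (a (idx k)) (b (idx k)))
      + s k ^+ 2 * (normv (gf k) + gamma k) ^+ 2.
Proof.
move=> m0 anz _ mu0 sc gp dp sp hsub hx y k fy k1.
have hs := sc y (x k) (gf k) (hsub k k1).
have fyi : dotv (a (idx k)) y - b (idx k) <= 0 := fy (idx k).
have hD := dist_half (x k) (b (idx k)) (anz (idx k)).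
have al0 := alpha_gt0 m0 anz.
have alN := alpha_le a (idx k).
have Np := normv_gt0 (anz (idx k)).
have CS := cauchy_schwarz (gf k) (a (idx k)).
have ng0 := normv_ge0 (gf k).
rewrite hx // /grad_hpen.
move: (idx k) hs fyi hD alN Np CS => i hs fyi hD alN Np CS.
move: (gf k) (x k) (gamma k) (delta k) (s k) (gp k) (dp k) (sp k) hs fyi hD alN Np CS ng0.
move=> g X gm dl sk gm0 dl0 sk0 hs fyi hD alN Np CS ng0.
have pb := dpen_bounds (dotv (a i) X - b i) dl0.
have pk := dpen_key (dotv (a i) X - b i) dl0.
move: pb pk hD.
set t := dotv (a i) X - b i.
set p := dpen dl t.
set N := normv (a i).
set D := distS X (halfspace (a i) (b i)).
move=> /andP [p0 p1] pk hD.
have -> : X - sk *: (g + gm *: ((p / N) *: a i)) - y = (X - y) - sk *: (g + (gm * (p / N)) *: a i).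
  by rewrite scalerA addrAC.
rewrite !normv_sq expand.
have eV : y - X = - (X - y) by rewrite opprB.
have eN : dotv g (- (X - y)) = - dotv g (X - y) by rewrite dotvC dotvNl dotvC.
rewrite eV normvN normv_sq eN in hs.
have eBa : dotv (a i) (X - y) = t - (dotv (a i) y - b i) by rewrite dotvBr /t; ring.
rewrite eBa -normv_sq -/N.
have ha : p * (t - (dotv (a i) y - b i)) >= p * t.
  apply: ler_wpM2l => //; lra.
rewrite -!normv_sq -/N in hs *.
move: ha; set u := t - (dotv (a i) y - b i) => ha.
set Bg := dotv g (X - y) in hs *.
set Ga := dotv g (a i) in CS *.
set A := normv (X - y) ^+ 2 in hs *.
set ng := normv g in CS ng0 *.
set al := alpha_min a in al0 alN *.
have q0 : N * D - dl / 8 <= p * u by lra.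
have q1 : D - dl / (8 * al) <= p / N * u.
  have e1 : p / N * u = (p * u) / N by rewrite mulrAC.
  have e2 : D - dl / (8 * N) = (N * D - dl / 8) / N by field; rewrite gt_eqF.
  have : D - dl / (8 * N) <= p / N * u by rewrite e1 e2 ler_pM2r ?invr_gt0.
  apply: le_trans; rewrite lerD2l lerN2 ler_pM2l // lef_pV2 ?posrE ?mulr_gt0 //.
  by rewrite ler_pM2l.
have q2 : p / N * Ga <= ng.
  have : p / N * Ga <= p / N * (ng * N) by apply: ler_wpM2l => //; rewrite divr_ge0 // ltW.
  move/le_trans; apply.
  have -> : p / N * (ng * N) = p * ng by field; rewrite gt_eqF.
  by rewrite -[X in _ <= X]mul1r ler_wpM2r.
have q3 : (p / N) ^+ 2 * N ^+ 2 <= 1.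
  have -> : (p / N) ^+ 2 * N ^+ 2 = p * p by field; rewrite gt_eqF.
  by rewrite -[1]mulr1 ler_pM.
have c0 : 0 <= 2 * sk * gm by rewrite !mulr_ge0 // ltW.
have m1 := ler_wpM2l c0 q1.
have s20 : 0 <= sk ^+ 2 by rewrite sqr_ge0.
have m2 := ler_wpM2l s20 (ler_wpM2l (ltW (mulr_gt0 (ltr0n R 2) gm0)) q2).
have m3 := ler_wpM2l s20 (ler_wpM2l (ltW (exprn_gt0 2 gm0)) q3).
have m4 : 2 * sk * (f X - f y + mu / 2 * A) <= 2 * sk * Bg.
  by rewrite ler_pM2l ?mulr_gt0 //; lra.
have e : sk * gm * dl / (2 * al) = 4 * (sk * gm * (dl / (8 * al))) by field; rewrite gt_eqF.
have m5 : 0 <= sk * gm * (dl / (8 * al)) by apply: mulr_ge0; [apply: mulr_ge0; exact: ltW | apply: divr_ge0; [exact: ltW | apply: mulr_ge0 => //; exact: ltW]].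
rewrite e.
move: m1 m2 m3 m4 m5; set c := p / N; set E := dl / (8 * al) => m1 m2 m3 m4 m5.
nra.
Qed.
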